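(* Let $n$ agents share an additive valuation $v$ with nonnegative item values, and let items $g_1,\dots,g_T$ lie on a line. For $t\in[T]$ let $X^t$ be the contiguous leximin$^2$ allocation of $M_t=\{g_1,\dots,g_t\}$. Then for every $t<T$ and every $j\in[n]$, $P_j(X^t)\le P_j(X^{t+1})$.
   Context: Contiguous allocation of $M_t$: agent $j$ receives the $j$-th block from the left. For a contiguous allocation $A$, $P(A)=(\ell_0,\dots,\ell_n)$ with $\ell_0=0$ and $P_j(A)=\ell_j$ the index of the last item of $A_j$. A leximin allocation is a contiguous allocation maximizing the lowest agent value, subject to that the second-lowest, and so on. The leximin$^2$ allocation is the leximin contiguous allocation with lexicographically smallest $P(A)$. *)

(* Defs.v *)
From mathcomp Require Import all_boot all_order all_algebra.
Set Implicit Arguments. Unset Strict Implicit. Unset Printing Implicit Defensive.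
Import Order.TTheory GRing.Theory Num.Theory.

(* Items g_1..g_T are indexed 0..T-1 (item g_{i+1} has value v i).
   A contiguous allocation of M_t = {g_1,..,g_t} to n agents is represented by
   its cut vector P = (l_0, l_1, ..., l_n) with l_0 = 0, l_0 <= ... <= l_n = t;
   agent j (1 <= j <= n) receives items g_{l_{j-1}+1}, ..., g_{l_j}
   (i.e. indices l_{j-1} <= i < l_j), possibly an empty block. *)

Definition contig_alloc (n t : nat) (P : seq nat) : bool :=
  [&& size P == n.+1, nth 0%N P 0 == 0%N, sorted leq P & nth 0%N P n == t].

Definition agent_value (R : realDomainType) (v : nat -> R) (P : seq nat) (j : nat) : R :=
  (\sum_(nth 0%N P j.-1 <= i < nth 0%N P j) v i)%R.

Definition values (R : realDomainType) (v : nat -> R) (n : nat) (P : seq nat) : seq R :=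
  [seq agent_value v P j | j <- iota 1 n].

Fixpoint lexle (d : Order.disp_t) (T : orderType d) (s1 s2 : seq T) : bool :=
  match s1, s2 with
  | [::], _ => true
  | _ :: _, [::] => false
  | x :: s1', y :: s2' => ((x < y)%O || ((x == y) && lexle s1' s2'))
  end.

Definition leximin_ge (R : realDomainType) (v : nat -> R) (n : nat) (P Q : seq nat) : bool :=
  lexle (sort <=%O (values v n Q)) (sort <=%O (values v n P)).

Definition is_leximin (R : realDomainType) (v : nat -> R) (n t : nat) (P : seq nat) : Prop :=
  contig_alloc n t P /\ forall Q, contig_alloc n t Q -> leximin_ge v n P Q.

Definition is_leximin2 (R : realDomainType) (v : nat -> R) (n t : nat) (P : seq nat) : Prop :=
  is_leximin v n t P /\ forall Q, is_leximin v n t Q -> lexle P Q.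

(* Main.v *)
Require Import Defs.
From mathcomp Require Import all_boot all_order all_algebra.
From mathcomp Require Import ring lra zify.
Import Order.TTheory GRing.Theory Num.Theory.

Section F.
Variable R : realDomainType.
Local Open Scope ring_scope.
Definition F (s : seq R) (th : R) : R := \sum_(z <- s) Num.min z th.

Lemma F_cons x s th : F (x :: s) th = Num.min x th + F s th.
Proof. by rewrite /F big_cons. Qed.

Lemma F_all_ge s th : all (fun z => th <= z) s -> F s th = th *+ size s.
Proof.
elim: s => [|x s IH] /=; first by rewrite /F big_nil.
case/andP=> hx hs; rewrite F_cons IH // mulrS.
by congr (_ + _); apply/min_idPr.
Qed.

Lemma F_le s th : F s th <= th *+ size s.
Proof.
elim: s => [|x s IH] /=; first by rewrite /F big_nil.
by rewrite F_cons mulrS lerD // ge_min lexx orbT.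
Qed.

Lemma F_perm s1 s2 th : perm_eq s1 s2 -> F s1 th = F s2 th.
Proof. by move=> h; rewrite /F (perm_big _ h). Qed.

Lemma lemA (s u : seq R) : sorted <=%O s -> sorted <=%O u -> size s = size u ->
  lexle s u -> s <> u -> exists a b, a < b /\ forall th, th <= b ->
   [/\ F s th <= F u th, (th <= a -> F s th = F u th) & (a < th -> F s th < F u th)].
Proof.
elim: s u => [|x s IH] [|y u] //= Hs Hu [Hsz] Hle Hne.
have Hs' := path_sorted Hs; have Hu' := path_sorted Hu.
case/orP: Hle => [Hxy | /andP[/eqP Exy Hl]].
- exists x, y; split => // th Hth.
  have Au : all (fun z => th <= z) (y :: u).
    apply/allP => z; rewrite inE => /orP[/eqP->//|zu].
    have := allP (order_path_min le_trans Hu) z zu => /= hz; exact: le_trans Hth hz.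
  rewrite (F_all_ge _ _ Au) F_cons /= mulrS -Hsz.
  have Hfs := F_le s th.
  split.
  + by rewrite lerD // ge_min lexx orbT.
  + move=> Htx.
    have As : all (fun z => th <= z) (x :: s).
      apply/allP => z; rewrite inE => /orP[/eqP->//|zs].
      have := allP (order_path_min le_trans Hs) z zs => /= hz; exact: le_trans Htx hz.
    by have := F_all_ge _ _ As; rewrite F_cons /= mulrS.
  + move=> Hxt; rewrite ltr_leD //.
    by rewrite (min_idPl (ltW Hxt)).
- subst y.
  have Hne' : s <> u by move=> E; apply: Hne; rewrite E.
  have [a [b [Hab Hf]]] := IH u Hs' Hu' Hsz Hl Hne'.
  exists a, b; split => // th Hth.
  have [h1 h2 h3] := Hf th Hth.
  rewrite !F_cons; split.
  + by rewrite lerD2l.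
  + by move=> H; rewrite h2.
  + by move=> H; rewrite ltrD2l h3.
Qed.
Lemma Fsort z th : F (sort <=%O z) th = F z th.
Proof. exact: F_perm (permEl (perm_sort _ _)). Qed.

Lemma lemC (x y m M : seq R) : size m = size x -> size M = size y ->
  (forall th, F x th + F y th <= F m th + F M th) ->
  lexle (sort <=%O m) (sort <=%O x) -> lexle (sort <=%O M) (sort <=%O y) ->
  sort <=%O m = sort <=%O x.
Proof.
move=> s1 s2 H l1 l2.
case: (eqVneq (sort <=%O m) (sort <=%O x)) => // /eqP ne.
exfalso.
have z1 : size (sort <=%O m) = size (sort <=%O x) by rewrite !size_sort.
have z2 : size (sort <=%O M) = size (sort <=%O y) by rewrite !size_sort.
have [a [b [ab Hf]]] := lemA _ _ (sort_sorted le_total m) (sort_sorted le_total x) z1 l1 ne.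
have [_ _ h3] := Hf b (lexx b).
have Hb := H b.
rewrite !Fsort in h3.
case: (eqVneq (sort <=%O M) (sort <=%O y)) => [E | /eqP ne2].
  have := congr1 (fun s => F s b) E; rewrite /= !Fsort => e1.
  move: (h3 ab) => e2; move: Hb e1 e2; generalize (F x b) (F y b) (F m b) (F M b); clear; move=> ????; lra.
have [a' [b' [ab' Hf']]] := lemA _ _ (sort_sorted le_total M) (sort_sorted le_total y) z2 l2 ne2.
case: (leP b a') => hba.
  have [_ h2' _] := Hf' b (le_trans hba (ltW ab')).
  move: (h2' hba) (h3 ab); rewrite !Fsort => e1 e2; move: Hb e1 e2; generalize (F x b) (F y b) (F m b) (F M b); clear; move=> ????; lra.
set th := Num.min b' b.
have t1 : th <= b' by rewrite ge_min lexx.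
have t2 : th <= b by rewrite ge_min lexx orbT.
have t3 : a' < th by rewrite lt_min ab' hba.
have [_ _ g3] := Hf' th t1.
have [g1 _ _] := Hf th t2.
move: (g3 t3) g1 (H th); rewrite !Fsort => e1 e2 e3; move: e1 e2 e3; generalize (F x th) (F y th) (F m th) (F M th); clear; move=> ????; lra.
Qed.
End F.
Section PP. Local Open Scope ring_scope.
Lemma lemP (R : realDomainType) (A B C D th : R) : A <= B -> C <= D ->
  Num.min (B - A) th + Num.min (D - C) th <=
  Num.min (Num.min B D - Num.min A C) th + Num.min (Num.max B D - Num.max A C) th.
Proof.
move=> h1 h2; rewrite !minEle !maxEle.
repeat (case: ifPn => [?|]; [|rewrite -ltNge => ?]); lra.


Qed.
End PP.

Section Alloc.
Variable R : realDomainType.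
Variable T : nat.
Variable v : nat -> R.
Hypothesis hv : forall i, (i < T)%N -> (0 <= v i)%R.

Definition S k := (\sum_(0 <= i < k) v i)%R.

Lemma sum_int a b : (a <= b)%N -> (\sum_(a <= i < b) v i)%R = (S b - S a)%R.
Proof.
by move=> hab; rewrite /S (@big_cat_nat _ _ _ a 0 b) //= addrC addrK.
Qed.

Lemma S_mono a b : (a <= b)%N -> (b <= T)%N -> (S a <= S b)%R.
Proof.
move=> hab hb; rewrite -subr_ge0 -sum_int // big_nat.
apply: sumr_ge0 => i /andP[_ ib]; apply: hv; exact: leq_trans ib hb.
Qed.

Lemma S_min a b : (a <= T)%N -> (b <= T)%N -> S (minn a b) = Num.min (S a) (S b).
Proof.
move=> ha hb; case: (leqP a b) => h.
  by rewrite (min_idPl (S_mono _ _ h hb)).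
by rewrite (min_idPr (S_mono _ _ (ltnW h) ha)).
Qed.

Lemma S_max a b : (a <= T)%N -> (b <= T)%N -> S (maxn a b) = Num.max (S a) (S b).
Proof.
move=> ha hb; case: (leqP a b) => h.
  by rewrite (max_idPr (S_mono _ _ h hb)).
by rewrite (max_idPl (S_mono _ _ (ltnW h) ha)).
Qed.

Lemma agent_val (P : seq nat) j : (nth 0 P j.-1 <= nth 0 P j)%N ->
  agent_value v P j = (S (nth 0 P j) - S (nth 0 P j.-1))%R.
Proof. by move=> h; rewrite /agent_value sum_int. Qed.
End Alloc.

Lemma lexle_nat (s u : seq nat) : size s = size u ->
  (forall i, nth 0 u i <= nth 0 s i)%N -> lexle s u -> s = u.
Proof.
elim: s u => [|x s IH] [|y u] //= [hs] hi.
have h0 := hi 0%N; rewrite /= in h0.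
case/orP => [hlt | /andP[/eqP exy hl]].
  have : (x < y)%N by []. lia.
by rewrite exy (IH u hs (fun i => hi i.+1) hl).
Qed.

Lemma mono_nth (X : seq nat) i k : sorted leq X -> (i <= k)%N -> (k < size X)%N ->
  (nth 0 X i <= nth 0 X k)%N.
Proof.
move=> sX hik hk; apply: (sorted_leq_nth leq_trans leqnn 0 sX); rewrite ?inE //.
exact: leq_ltn_trans hik hk.
Qed.

Theorem mainTheorem5 (R : realDomainType) (n T : nat) (v : nat -> R)
  (hn : (0 < n)%N) (hv : forall i, (i < T)%N -> (0 <= v i)%R) :
  forall (t : nat) (X Y : seq nat), (t < T)%N ->
    is_leximin2 v n t X -> is_leximin2 v n t.+1 Y ->
    forall j, (1 <= j <= n)%N -> (nth 0%N X j <= nth 0%N Y j)%N.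
Proof.
move=> t X Y Ht [[cX hX] mX] [[cY hY] mY] j Hj.
move: (cX) (cY) => /and4P[/eqP zX /eqP x0 sX /eqP xn] /and4P[/eqP zY /eqP y0 sY /eqP yn].
have mX' i k : (i <= k)%N -> (k <= n)%N -> (nth 0 X i <= nth 0 X k)%N.
  by move=> h1 h2; apply: mono_nth; rewrite // zX.
have mY' i k : (i <= k)%N -> (k <= n)%N -> (nth 0 Y i <= nth 0 Y k)%N.
  by move=> h1 h2; apply: mono_nth; rewrite // zY.
pose Pm := mkseq (fun i => minn (nth 0 X i) (nth 0 Y i)) n.+1.
pose PM := mkseq (fun i => maxn (nth 0 X i) (nth 0 Y i)) n.+1.
have cPm : contig_alloc n t Pm.
  apply/and4P; split; first by rewrite size_mkseq.
  - by rewrite nth_mkseq // x0 y0.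
  - apply/(sortedP 0%N) => i; rewrite size_mkseq => hi.
    rewrite !nth_mkseq //; last exact: ltnW.
    have := mX' i i.+1 (leqnSn i) hi; have := mY' i i.+1 (leqnSn i) hi; lia.
  - rewrite nth_mkseq // xn yn; apply/eqP; lia.
have cPM : contig_alloc n t.+1 PM.
  apply/and4P; split; first by rewrite size_mkseq.
  - by rewrite nth_mkseq // x0 y0.
  - apply/(sortedP 0%N) => i; rewrite size_mkseq => hi.
    rewrite !nth_mkseq //; last exact: ltnW.
    have := mX' i i.+1 (leqnSn i) hi; have := mY' i i.+1 (leqnSn i) hi; lia.
  - rewrite nth_mkseq // xn yn; apply/eqP; lia.
have key th : (F R (values v n X) th + F R (values v n Y) th <=
               F R (values v n Pm) th + F R (values v n PM) th)%R.
  rewrite /F /values !big_map -!big_split /= !big_seq; apply: ler_sum => k.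
  rewrite mem_iota => /andP[k1 k2].
  have kn : (k <= n)%N by rewrite add1n ltnS in k2.
  have hXk := mX' k.-1 k (leq_pred k) kn.
  have hYk := mY' k.-1 k (leq_pred k) kn.
  have bX : (nth 0 X k <= T)%N by have := mX' k n kn (leqnn n); rewrite xn; lia.
  have bY : (nth 0 Y k <= T)%N by have := mY' k n kn (leqnn n); rewrite yn; lia.
  have bX' : (nth 0 X k.-1 <= T)%N by lia.
  have bY' : (nth 0 Y k.-1 <= T)%N by lia.
  have k1' : (k.-1 < n.+1)%N by lia.
  rewrite (agent_val _ _ _ _ hXk) (agent_val _ _ _ _ hYk).
  rewrite (agent_val _ v Pm k); last by rewrite !nth_mkseq //; lia.
  rewrite (agent_val _ v PM k); last by rewrite !nth_mkseq //; lia.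
  rewrite !nth_mkseq // !(S_min _ _ _ hv) // !(S_max _ _ _ hv) //.
  by apply: lemP; apply: (S_mono _ _ _ hv).
have sz P : size (values v n P) = n by rewrite size_map size_iota.
have l1 : lexle (sort <=%O (values v n Pm)) (sort <=%O (values v n X)).
  by move: (hX Pm cPm); rewrite /leximin_ge.
have l2 : lexle (sort <=%O (values v n PM)) (sort <=%O (values v n Y)).
  by move: (hY PM cPM); rewrite /leximin_ge.
have E := @lemC R (values v n X) (values v n Y) (values v n Pm) (values v n PM) (etrans (sz Pm) (esym (sz X))) (etrans (sz PM) (esym (sz Y))) key l1 l2.
have lPm : is_leximin v n t Pm.
  by split => // Q cQ; rewrite /leximin_ge E; exact: hX Q cQ.
have EX : X = Pm.
  apply: lexle_nat (mX Pm lPm).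
    by rewrite size_mkseq zX.
  move=> i; case: (ltnP i n.+1) => hi.
    by rewrite nth_mkseq // geq_minl.
  by rewrite nth_default // size_mkseq.
have jn : (j < n.+1)%N by case/andP: Hj.
by rewrite EX nth_mkseq // geq_minr.
Qed.
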